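(* Let $(U,\mathrm{dist})$ be a metric space, $\gamma>0$, $\eta>0$, $\Lambda\in\mathbb{R}_{>0}\cup\{\infty\}$, $p>1$, $\theta\ge1$, $m\ge1$. Let $f:U\to\mathbb{R}^m$, where $\mathbb{R}^m$ is equipped with the $\ell_1$ metric, and let $B(\cdot)$ be a $g_E$-smooth upper bound on $\mathrm{L}_{f,\Lambda}$, where $g_E(x,x')=e^{\gamma\,\mathrm{dist}(x,x')}$. Then the mechanism $M$ which on input $x$ releases $M(x)=f(x)+\frac{B(x)}{\eta}Z$, where $Z=(Z_1,\dots,Z_m)$ with $Z_j$ i.i.d. $\mathrm{GenCauchy}(0,1,p,\theta)$, is $(\varepsilon,0,\Lambda)$-GP, where $\varepsilon=\max(m\gamma,m(p\theta-1)\gamma)+(p-1)^{\frac{p-1}{p}}\theta\eta$.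
   Context: $\mathrm{L}_{f,\Lambda}(x)$ is the infimum of all $K$ such that $\|f(x)-f(x')\|_1\le K\,\mathrm{dist}(x,x')$ for all $x'\in U$ with $\mathrm{dist}(x,x')\le\Lambda$. A $g$-smooth upper bound on $\mathrm{L}_{f,\Lambda}$ is $B:U\to\mathbb{R}_{\ge0}$ with (1) $B(x)\ge\mathrm{L}_{f,\Lambda}(x)$ for all $x$ and (2) $B(x)\le g(x,x')B(x')$ for all $x,x'\in U$. $\mathrm{GenCauchy}(0,1,p,\theta)$ is the distribution on $\mathbb{R}$ with density $c_{p,\theta}(1+|y|^p)^{-\theta}$, $c_{p,\theta}=\frac{p\Gamma(\theta)}{2\Gamma(1/p)\Gamma(\theta-1/p)}$. A mechanism $M$ with outputs in $\mathbb{R}^m$ is $(\varepsilon,\delta,\Lambda)$-GP if for every measurable $S\subseteq\mathbb{R}^m$ and all $x,x'$ with $\mathrm{dist}(x,x')\le\Lambda$: $\Pr[M(x)\in S]\le e^{\varepsilon\,\mathrm{dist}(x,x')}\Pr[M(x')\in S]+\delta$. *)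

(* Defs.v *)
From HB Require Import structures.
From mathcomp Require Import all_boot all_order all_algebra.
From mathcomp Require Import all_classical all_reals all_analysis.
Set Implicit Arguments. Unset Strict Implicit. Unset Printing Implicit Defensive.
Import Order.TTheory GRing.Theory Num.Theory.
Import numFieldNormedType.Exports.
Local Open Scope classical_set_scope.
Local Open Scope ring_scope.

Section Defs.
Variable R : realType.

Definition is_metric (U : Type) (dist : U -> U -> R) : Prop :=
  [/\ forall x y, 0 <= dist x y,
      forall x y, dist x y = 0 <-> x = y,
      forall x y, dist x y = dist y x &
      forall x y z, dist x z <= dist x y + dist y z].

Definition l1dist (m : nat) (a b : m.-tuple R) : R :=
  \sum_(i < m) `|tnth a i - tnth b i|.

Definition localLip (U : Type) (dist : U -> U -> R) (m : nat)
  (f : U -> m.-tuple R) (Lambda : \bar R) (x : U) : \bar R :=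
  ereal_inf [set (K%:E) | K in [set K : R | 0 <= K /\
     forall x', ((dist x x')%:E <= Lambda)%E ->
       l1dist (f x) (f x') <= K * dist x x']].

Definition smooth_upper_bound (U : Type) (dist : U -> U -> R) (m : nat)
  (f : U -> m.-tuple R) (Lambda : \bar R) (g : U -> U -> R) (B : U -> R) : Prop :=
  [/\ forall x, 0 <= B x,
      forall x, (localLip dist f Lambda x <= (B x)%:E)%E
    & forall x x', B x <= g x x' * B x'].

Definition Gamma (s : R) : R :=
  fine (\int[@lebesgue_measure R]_(t in `]0%R, +oo[) ((t `^ (s - 1)) * expR (- t))%:E)%E.

Definition gencauchy_c (p theta : R) : R :=
  p * Gamma theta / (2 * Gamma (p^-1) * Gamma (theta - p^-1)).

Definition gencauchy_pdf (p theta : R) (y : R) : R :=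
  gencauchy_c p theta * (1 + `|y| `^ p) `^ (- theta).

Fixpoint iter_integral (n : nat) : (n.-tuple R -> \bar R) -> \bar R :=
  match n return (n.-tuple R -> \bar R) -> \bar R with
  | 0 => fun F => F [tuple]
  | n'.+1 => fun F =>
      (\int[@lebesgue_measure R]_t iter_integral (fun z : n'.-tuple R => F [tuple of t :: z]))%E
  end.

(* Pr[ f(x) + (B(x)/eta) Z \in S ], Z_j iid GenCauchy(0,1,p,theta) *)
Definition gencauchy_mech_prob (U : Type) (m : nat) (f : U -> m.-tuple R)
  (B : U -> R) (eta p theta : R) (x : U) (S : set (m.-tuple R)) : \bar R :=
  iter_integral (fun z : m.-tuple R =>
    ((\1_S [tuple tnth (f x) i + B x / eta * tnth z i | i < m] : R)
      * \prod_(j < m) gencauchy_pdf p theta (tnth z j))%:E).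

Definition GP (U : Type) (dist : U -> U -> R) (m : nat)
  (Pr : U -> set (m.-tuple R) -> \bar R) (eps delta : R) (Lambda : \bar R) : Prop :=
  forall S : set (m.-tuple R), measurable S ->
  forall x x', ((dist x x')%:E <= Lambda)%E ->
    (Pr x S <= (expR (eps * dist x x'))%:E * Pr x' S + delta%:E)%E.

End Defs.

(* Main.v *)
Require Import Defs.
From HB Require Import structures.
From mathcomp Require Import all_boot all_order all_algebra.
From mathcomp Require Import all_classical all_reals all_analysis.
From mathcomp Require measurable_realfun lra ring.
Import Order.TTheory GRing.Theory Num.Theory.
Local Open Scope classical_set_scope.
Local Open Scope ring_scope.

Module H1.
Import measurable_realfun lra ring.
Import Order.TTheory GRing.Theory Num.Theory.
Local Open Scope classical_set_scope.
Local Open Scope ring_scope.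
Import numFieldNormedType.Exports.

Section S.
Variable R : realType.
Local Notation lam := (@lebesgue_measure R).

Definition aff (a r : R) (t : R) : R := a + r * t.

Lemma aff_mfun a r : @measurable_fun _ _ (measurableTypeR R) (measurableTypeR R) setT (aff a r).
Proof.
apply: continuous_measurable_fun => x.
rewrite /aff; apply: continuousD; first exact: cvg_cst.
apply: continuousM; [exact: cvg_cst | exact: cvg_id].
Qed.

Lemma aff_preimage_itv a r x1 x2 : 0 < r ->
  aff a r @^-1` `]x1, x2] = `](x1 - a) / r, (x2 - a) / r]%classic.
Proof.
move=> r0; apply/seteqP; split => t /=; rewrite /aff !in_itv /=.
  move=> /andP[h1 h2]; rewrite ltr_pdivrMr // ler_pdivlMr //.
  by rewrite ltrBlDl lerBrDl mulrC h1 /= h2.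
rewrite ltr_pdivrMr // ler_pdivlMr // => /andP[h1 h2].
rewrite -ltrBlDl mulrC h1 /=; lra.
Qed.


Lemma lam_aff a r (r0 : 0 < r) (A : set R) : measurable A ->
  (lam (aff a r @^-1` A) = (r^-1)%:E * lam A)%E.
Proof.
move=> mA.
pose P := measure_function_pushforward__canonical__measure_function_Measure lam (aff_mfun a r).
have r0' : 0 <= r by exact: ltW.
pose mu : measure (measurableTypeR R) R := mscale (NngNum r0') P.
have := @lebesgue_measure_unique R mu _ _ mA.
move=> ->; last first.
  move=> X [[x1 x2] _ <-]; rewrite /mu /=.
  change (lam `]x1, x2] = (r%:E * lam (aff a r @^-1` `]x1, x2]))%E).
  rewrite aff_preimage_itv //.
  rewrite !lebesgue_measure_itv /= !lte_fin.
  have -> : ((x1 - a) / r < (x2 - a) / r) = (x1 < x2).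
    by rewrite ltr_pM2r ?invr_gt0 // ltrD2r.
  case: ifP => _; last by rewrite mule0.
  rewrite -EFinM -EFinD; congr (_%:E).
  by field; rewrite gt_eqF.
rewrite /mu /mscale /= /pushforward muleA -EFinM mulVf ?gt_eqF // mul1e //.
Qed.

Local Open Scope ereal_scope.
Import HBNNSimple.

Lemma int_mono (F G : R -> \bar R) : (forall t, 0 <= F t) -> (forall t, F t <= G t) ->
  \int[lam]_t F t <= \int[lam]_t G t.
Proof.
move=> F0 FG; have G0 t : 0 <= G t := le_trans (F0 t) (FG t).
rewrite !ge0_integralTE //; apply: le_ereal_sup => _ [h hF <-]; exists h => //.
by move=> t; exact: le_trans (hF t) (FG t).
Qed.

Lemma int_sup (F : R -> \bar R) (X : \bar R) : (forall t, 0 <= F t) ->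
  (forall h : {nnsfun (measurableTypeR R) >-> R}, (forall t, (h t)%:E <= F t) ->
     \int[lam]_t (h t)%:E <= X) ->
  \int[lam]_t F t <= X.
Proof.
move=> F0 H; rewrite ge0_integralTE //; apply: ge_ereal_sup => _ [h hF <-].
by rewrite -integralT_nnsfun; exact: H.
Qed.

Lemma int_cov_nnsfun (h : {nnsfun (measurableTypeR R) >-> R}) a r : (0 < r)%R ->
  \int[lam]_t (h (aff a r t))%:E = (r^-1)%:E * \int[lam]_t (h t)%:E.
Proof.
move=> r0.
have mh : measurable_fun setT (EFin \o h).
  by apply/measurable_EFinP; exact: measurable_funP.
have := @ge0_integral_pushforward _ _ (measurableTypeR R) (measurableTypeR R) R (aff a r) (aff_mfun a r) lam setT (EFin \o h)
  measurableT mh (fun y _ => ltac:(by rewrite /= lee_fin)).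
rewrite preimage_setT => <-.
rewrite (@eq_measure_integral _ _ _ setT (mscale (NngNum (ltac:(by rewrite invr_ge0 ltW) : (0 <= r^-1)%R)) lam)).
all: first [exact: aff_mfun | (move=> ? A mA _; rewrite /mscale /= /pushforward lam_aff //) | idtac].
rewrite ge0_integral_mscale //; by move=> y _; rewrite /= lee_fin.
Qed.

Lemma int_scale_le (F : R -> \bar R) (c : R) : (0 <= c)%R -> (forall t, 0 <= F t) ->
  \int[lam]_t (c%:E * F t) <= c%:E * \int[lam]_t F t.
Proof.
move=> c0 F0; have [->|cpos] := eqVneq c 0%R.
  rewrite mul0e (eq_integral (cst 0)) ?integral0 // => t _; by rewrite mul0e.
have cgt : (0 < c)%R by rewrite lt_def cpos c0.
apply: int_sup => [t|h hF]; first by rewrite mule_ge0.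
have mh : measurable_fun setT (fun t => ((c^-1 * h t)%R)%:E).
  apply/measurable_EFinP; apply: measurable_funM => //; exact: measurable_funP.
rewrite (eq_integral (fun t => c%:E * ((c^-1 * h t)%R)%:E)); last first.
  by move=> t _; rewrite -EFinM mulrA mulfV ?mul1r.
rewrite ge0_integralZl_EFin //; last by move=> t _; rewrite lee_fin mulr_ge0 ?invr_ge0.
apply: lee_wpmul2l; first by rewrite lee_fin.
apply: int_mono => [t|t]; first by rewrite lee_fin mulr_ge0 ?invr_ge0.
rewrite -(@lee_pmul2l _ c%:E) ?lte_fin // -EFinM mulrA mulfV ?gt_eqF // mul1r; exact: hF.
Qed.

Lemma int_scale (F : R -> \bar R) (c : R) : (0 <= c)%R -> (forall t, 0 <= F t) ->
  \int[lam]_t (c%:E * F t) = c%:E * \int[lam]_t F t.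
Proof.
move=> c0 F0; apply/eqP; rewrite eq_le int_scale_le //=.
have [->|cpos] := eqVneq c 0%R.
  by rewrite mul0e integral_ge0 // => t _; rewrite mul0e.
have cgt : (0 < c)%R by rewrite lt_def cpos c0.
have cF0 t : 0 <= c%:E * F t by rewrite mule_ge0 // lee_fin.
have := @int_scale_le (fun t => c%:E * F t) c^-1 (ltac:(by rewrite invr_ge0)) cF0.
have -> : (fun t => (c^-1)%:E * (c%:E * F t)) = F.
  by apply/funext => t; rewrite muleA -EFinM mulVf ?mul1e.
move=> H; rewrite -(@lee_pmul2l _ (c^-1)%:E) ?lte_fin ?invr_gt0 //.
by rewrite muleA -EFinM mulVf ?mul1e.
Qed.

Lemma int_cov (F : R -> \bar R) a r : (0 < r)%R -> (forall t, 0 <= F t) ->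
  \int[lam]_t F t <= r%:E * \int[lam]_t F (aff a r t).
Proof.
move=> r0 F0; apply: int_sup => // h hF.
have := @int_cov_nnsfun h a r r0.
move/(congr1 (fun x => r%:E * x)); rewrite muleA -EFinM mulfV ?gt_eqF // mul1e => <-.
apply: lee_wpmul2l; first by rewrite lee_fin ltW.
by apply: int_mono => t //; rewrite lee_fin.
Qed.

End S.

End H1.

Module H2.
Import measurable_realfun lra ring.
Import Order.TTheory GRing.Theory Num.Theory.
Local Open Scope classical_set_scope.
Local Open Scope ring_scope.
Import H1.
Set Implicit Arguments. Unset Strict Implicit. Unset Printing Implicit Defensive.
Import numFieldNormedType.Exports.

Section S2.
Variable R : realType.
Local Open Scope ereal_scope.

Lemma iter_ge0 n (F : n.-tuple R -> \bar R) : (forall z, 0 <= F z) -> 0 <= iter_integral F.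
Proof.
elim: n F => [|n IH] F F0 /=; first exact: F0.
by apply: integral_ge0 => t _; apply: IH => z.
Qed.

Lemma iter_mono n (F G : n.-tuple R -> \bar R) : (forall z, 0 <= F z) ->
  (forall z, F z <= G z) -> iter_integral F <= iter_integral G.
Proof.
elim: n F G => [|n IH] F G F0 FG /=; first exact: FG.
apply: int_mono => t; first by apply: iter_ge0.
by apply: IH.
Qed.

Lemma iter_scale n (F : n.-tuple R -> \bar R) (c : R) : (0 <= c)%R -> (forall z, 0 <= F z) ->
  iter_integral (fun z => c%:E * F z) = c%:E * iter_integral F.
Proof.
move=> c0; elim: n F => [|n IH] F F0 //=.
rewrite -int_scale //; last by move=> t; apply: iter_ge0.
by congr (integral _ _ _); apply/funext => t; rewrite IH.
Qed.

Definition taff n (a : n.-tuple R) (r : R) (z : n.-tuple R) : n.-tuple R :=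
  [tuple (tnth a i + r * tnth z i)%R | i < n].

Lemma taff_cons n a0 (a : n.-tuple R) r t (z : n.-tuple R) :
  taff [tuple of a0 :: a] r [tuple of t :: z] =
  [tuple of (a0 + r * t)%R :: taff a r z].
Proof.
apply: eq_from_tnth => i; rewrite /taff tnth_mktuple.
case: (unliftP ord0 i) => [j ->|->]; last by rewrite !tnth0.
by rewrite !tnthS tnth_mktuple.
Qed.

Lemma iter_cov n (F : n.-tuple R -> \bar R) (a : n.-tuple R) (r : R) : (0 < r)%R ->
  (forall z, 0 <= F z) ->
  iter_integral F <= iter_integral (fun z => (r ^+ n)%:E * F (taff a r z)).
Proof.
move=> r0; elim: n F a => [|n IH] F a F0.
  rewrite /= expr0 mul1e; have -> // : taff a r [tuple] = [tuple].
  by apply: eq_from_tnth => -[].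
case/tupleP: a => a0 a; rewrite /=.
pose G t := iter_integral (fun z : n.-tuple R => (r ^+ n)%:E * F [tuple of t :: taff a r z]).
apply: (@le_trans _ _ (\int[lebesgue_measure]_t G t)).
  apply: int_mono => t; first by apply: iter_ge0.
  have := IH (fun z => F [tuple of t :: z]) a (fun z => F0 _).
  by [].
have G0 t : 0 <= G t.
  by apply: iter_ge0 => z; rewrite mule_ge0 // lee_fin exprn_ge0 // ltW.
apply: (le_trans (@int_cov R G a0 r r0 G0)).
rewrite -int_scale //; last by rewrite ltW.
rewrite le_eqVlt; apply/orP; left; apply/eqP; congr (integral _ _ _); apply/funext => t.
rewrite /G /aff -iter_scale; first last.
- by move=> z; rewrite mule_ge0 // lee_fin exprn_ge0 // ltW.
- by rewrite ltW.
congr (iter_integral _); apply/funext => z.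
by rewrite taff_cons muleA -EFinM exprS.
Qed.

End S2.

End H2.

Module H3.
Import measurable_realfun lra ring.
Import Order.TTheory GRing.Theory Num.Theory.
Local Open Scope classical_set_scope.
Local Open Scope ring_scope.
Set Implicit Arguments. Unset Strict Implicit. Unset Printing Implicit Defensive.
Import numFieldNormedType.Exports.

Section S3.
Variable R : realType.

Lemma young_bound (p c : R) : 1 < p -> 0 < c ->
  p * c `^ (p - 1) <= (p - 1) `^ ((p - 1) / p) * (1 + c `^ p).
Proof.
move=> p1 c0.
have p0 : 0 < p by apply: lt_trans p1.
have pm0 : 0 < p - 1 by rewrite subr_gt0.
have := @conjugate_powR R (c `^ (p - 1)) ((p - 1) `^ (p^-1)) (p / (p - 1)) p
  (powR_ge0 _ _) (powR_ge0 _ _) (divr_gt0 p0 pm0) p0 ltac:(field; rewrite ?gt_eqF //).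
rewrite -!powRrM.
have -> : (p - 1) * (p / (p - 1)) = p by field; rewrite gt_eqF.
have -> : p^-1 * p = 1 by rewrite mulVf // gt_eqF.
rewrite powRr1; last exact: ltW.
move=> H.
have Hb : 0 < (p - 1) `^ p^-1 by apply: powR_gt0.
have HL : (p - 1) `^ ((p - 1) / p) = (p - 1) / (p - 1) `^ p^-1.
  have -> : (p - 1) / p = 1 - p^-1 by field; rewrite gt_eqF.
  rewrite powRB ?powRr1 //; [exact: ltW | by apply/implyP => _; rewrite gt_eqF].
rewrite HL.
rewrite -(@ler_pM2r _ ((p - 1) `^ p^-1 / p)); last by rewrite divr_gt0.
have -> : p * c `^ (p - 1) * ((p - 1) `^ p^-1 / p) = c `^ (p - 1) * (p - 1) `^ p^-1.
  by field; rewrite gt_eqF.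
apply: (le_trans H); rewrite le_eqVlt; apply/orP; left; apply/eqP.
by field; rewrite !gt_eqF.
Qed.

Definition phi (p x : R) := ln (1 + x `^ p).

Lemma phi_derive (p x : R) : 0 < x ->
  is_derive x 1 (phi p) (p * x `^ (p - 1) / (1 + x `^ p)).
Proof.
move=> x0.
have u0 : 0 < 1 + x `^ p by rewrite ltr_pwDl ?powR_ge0.
have hu : is_derive x 1 (fun y => 1 + y `^ p) (p * x `^ (p - 1)).
  have := is_deriveD (is_derive_cst (1:R) x 1) (is_derive1_powR p x0).
  by rewrite add0r.
have hl := is_derive1_ln u0.
have du : derivable (fun y => 1 + y `^ p) x 1 by case: hu.
have dl : derivable (@ln R) (1 + x `^ p) 1 by case: hl.
have dphi : derivable (phi p) x 1.
  apply/derivable1_diffP; rewrite /phi.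
  apply: (@differentiable_comp _ _ _ _ (fun y => 1 + y `^ p) (@ln R)).
    exact/derivable1_diffP.
  exact/derivable1_diffP.
apply: DeriveDef => //.
rewrite -derive1E /phi.
have -> : (fun y => ln (1 + y `^ p)) = (@ln R) \o (fun y => 1 + y `^ p) by [].
rewrite (derive1_comp du dl) !derive1E.
rewrite (@derive_val _ _ _ _ _ _ _ hl) (@derive_val _ _ _ _ _ _ _ hu).
by rewrite mulrC.
Qed.

Definition Lc (p : R) := (p - 1) `^ ((p - 1) / p).

Lemma Lc_gt0 p : 1 < p -> 0 < Lc p.
Proof. by move=> p1; apply: powR_gt0; rewrite subr_gt0. Qed.

Lemma phi_lip_pos p s' s : 1 < p -> 0 < s' -> s' <= s ->
  phi p s - phi p s' <= Lc p * (s - s').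
Proof.
move=> p1 s'0 ss'.
have p0 : 0 < p by apply: lt_trans p1.
have der : forall x, x \in `]s', s[ -> is_derive x 1 (phi p) (p * x `^ (p - 1) / (1 + x `^ p)).
  move=> x; rewrite in_itv /= => /andP[h _]; apply: phi_derive; exact: lt_trans h.
have cont : {within `[s', s], continuous (phi p)}.
  apply: derivable_within_continuous => x; rewrite in_itv /= => /andP[h _].
  by have [] := phi_derive p (lt_le_trans s'0 h).
have [c cin ->] := MVT_segment ss' der cont.
move: cin; rewrite in_itv /= => /andP[c1 _].
have c0 : 0 < c by apply: lt_le_trans c1.
apply: ler_wpM2r; first by rewrite subr_ge0.
rewrite ler_pdivrMr; last by rewrite ltr_pwDl ?powR_ge0.
exact: young_bound.
Qed.

Lemma phi0 p : 0 < p -> phi p 0 = 0.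
Proof. by move=> p0; rewrite /phi powR0 ?gt_eqF // addr0 ln1. Qed.

Lemma phi_lip p s' s : 1 < p -> 0 <= s' -> s' <= s ->
  phi p s - phi p s' <= Lc p * (s - s').
Proof.
move=> p1 s'0 ss'.
have p0 : 0 < p by apply: lt_trans p1.
have [s'pos|s'z] := eqVneq s' 0; last first.
  by apply: phi_lip_pos => //; rewrite lt_def s'z s'0.
subst s'; rewrite phi0 // subr0 subr0.
have [sz|snz] := eqVneq s 0; first by rewrite sz phi0 // mulr0.
have s0 : 0 < s by rewrite lt_def snz ss'.
have L0 := Lc_gt0 p1.
have pm0 : 0 < p - 1 by rewrite subr_gt0.
pose t := Num.min s (Lc p `^ (p - 1)^-1).
have t0 : 0 < t by rewrite lt_min s0 powR_gt0.
have ts : t <= s by rewrite ge_min lexx.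
have tp : t `^ (p - 1) <= Lc p.
  have : t <= Lc p `^ (p - 1)^-1 by rewrite ge_min lexx orbT.
  move/(@ge0_ler_powR _ (p - 1) (ltW pm0) t _ (ltW t0)).
  rewrite -powRrM mulVf ?gt_eqF // powRr1; last exact: ltW.
  by apply; rewrite nnegrE powR_ge0.
have ht : phi p t <= Lc p * t.
  apply: (le_trans (le_ln1Dx _)).
    by apply: (lt_le_trans _ (powR_ge0 _ _)); rewrite ltrN10.
  rewrite -mulr_powRB1 ?(ltW t0) // mulrC.
  by apply: ler_wpM2r => //; exact: ltW.
have := phi_lip_pos p1 t0 ts.
lra.
Qed.

End S3.

End H3.

Module H4.
Import measurable_realfun lra ring.
Import Order.TTheory GRing.Theory Num.Theory.
Local Open Scope classical_set_scope.
Local Open Scope ring_scope.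
Import H3.
Set Implicit Arguments. Unset Strict Implicit. Unset Printing Implicit Defensive.
Import numFieldNormedType.Exports.

Section S4.
Variable R : realType.

Definition hh (p th y : R) := expR (- th * phi p `|y|).

Lemma hhE p th y : (1 + `|y| `^ p) `^ (- th) = hh p th y.
Proof.
rewrite /hh /phi /powR; have -> : (1 + `|y| `^ p == 0) = false.
  by rewrite gt_eqF // ltr_pwDl ?powR_ge0.
by [].
Qed.

Lemma phi_mono (p s s' : R) : 0 < p -> 0 <= s -> s <= s' -> phi p s <= phi p s'.
Proof.
move=> p0 s0 ss'.
rewrite /phi ler_ln ?posrE ?ltr_pwDl ?powR_ge0 // lerD2l.
apply: ge0_ler_powR => //; first exact: ltW.
by rewrite nnegrE (le_trans s0).
Qed.

Lemma hh_shift (p th u d : R) : 1 < p -> 0 <= th ->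
  hh p th (u + d) <= expR (th * Lc p * `|d|) * hh p th u.
Proof.
move=> p1 th0; have p0 : 0 < p by apply: lt_trans p1.
rewrite /hh -expRD ler_expR.
suff : th * (phi p `|u| - phi p `|u + d|) <= th * (Lc p * `|d|) by lra.
apply: ler_wpM2l => //.
have [h|h] := leP `|u| `|u + d|.
  have := phi_mono p0 (normr_ge0 u) h.
  have := Lc_gt0 p1; have := normr_ge0 d; nra.
apply: (le_trans (phi_lip p1 (normr_ge0 _) (ltW h))).
apply: ler_wpM2l; first exact: ltW (Lc_gt0 p1).
have := ler_normB u (u + d); rewrite opprD addNKr normrN.
have := lerB_normD u d.
lra.
Qed.

Lemma phi_dil_lt1 (p r s : R) : 0 < p -> 0 < r -> r < 1 -> 0 <= s ->
  p * ln r + phi p s <= phi p (r * s).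
Proof.
move=> p0 r0 r1 s0.
have rp0 : 0 < r `^ p by apply: powR_gt0.
have rp1 : r `^ p <= 1.
  rewrite /powR gt_eqF // -expR0 ler_expR; apply: mulr_ge0_le0; first exact: ltW.
  by apply: ln_le0; exact: ltW.
rewrite /phi -(ln_powR r p) -lnM ?posrE ?ltr_pwDl ?powR_ge0 //.
rewrite ler_ln ?posrE ?mulr_gt0 ?ltr_pwDl ?powR_ge0 //.
rewrite powRM ?(ltW r0) // mulrDr mulr1 lerD2r //.
Qed.

Lemma hh_dil (p th r v K : R) : 1 < p -> 1 <= th -> 0 < r -> ln r <= K ->
  (p * th - 1) * (- ln r) <= K ->
  r * hh p th (r * v) <= expR K * hh p th v.
Proof.
move=> p1 th1 r0 hK1 hK2.
have p0 : 0 < p by apply: lt_trans p1.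
rewrite /hh -{1}(lnK r0) -!expRD ler_expR normrM (gtr0_norm r0).
have [r1|r1] := leP 1 r.
  have : phi p `|v| <= phi p (r * `|v|).
    apply: phi_mono => //; rewrite ler_peMl //.
  have : 0 <= th by apply: le_trans th1.
  nra.
have := phi_dil_lt1 p0 r0 r1 (normr_ge0 v).
have : 0 <= th by apply: le_trans th1.
nra.
Qed.

End S4.

End H4.

Module H5.
Import measurable_realfun lra ring.
Import Order.TTheory GRing.Theory Num.Theory.
Local Open Scope classical_set_scope.
Local Open Scope ring_scope.
Import H1.
Import H2.
Import H3.
Import H4.
Set Implicit Arguments. Unset Strict Implicit. Unset Printing Implicit Defensive.
Import numFieldNormedType.Exports.

Section S5.
Variable R : realType.

Lemma lip_bound (U : Type) (dist : U -> U -> R) (m : nat) (f : U -> m.-tuple R)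
  (Lambda : \bar R) (y y' : U) (b : R) :
  (localLip dist f Lambda y <= b%:E)%E -> ((dist y y')%:E <= Lambda)%E -> 0 <= dist y y' ->
  l1dist (f y) (f y') <= b * dist y y'.
Proof.
move=> hL hd d0; apply/ler_addgt0Pr => e e0.
have e1 : 0 < e / (dist y y' + 1) by rewrite divr_gt0 // ltr_wpDl.
have : (localLip dist f Lambda y < (b + e / (dist y y' + 1))%:E)%E.
  by apply: (le_lt_trans hL); rewrite lte_fin ltrDl.
case/ereal_inf_lt => _ [K [K0 HK] <-]; rewrite lte_fin => Kb.
apply: (le_trans (HK y' hd)).
have : K * dist y y' <= (b + e / (dist y y' + 1)) * dist y y'.
  by apply: ler_wpM2r => //; exact: ltW.
move=> H; apply: (le_trans H); rewrite mulrDl lerD2l.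
rewrite mulrAC ler_pdivrMr ?ltr_wpDl //.
by rewrite ler_pM2l // lerDl.
Qed.

Lemma l1dist0 (m : nat) (a b : m.-tuple R) : l1dist a b <= 0 -> a = b.
Proof.
move=> h; have h0 : l1dist a b = 0.
  by apply/eqP; rewrite eq_le h sumr_ge0.
apply: eq_from_tnth => i.
have := @psumr_eq0P _ _ predT (fun i => `|tnth a i - tnth b i|) (fun i _ => normr_ge0 _) h0 i isT.
by move/eqP; rewrite normr_eq0 subr_eq0 => /eqP.
Qed.

Lemma iprob_ge0 (U : Type) m (f : U -> m.-tuple R) B eta p theta x S :
  (0 <= gencauchy_c p theta)%R ->
  (0 <= gencauchy_mech_prob f B eta p theta x S)%E.
Proof.
move=> c0; apply: iter_ge0 => z; rewrite lee_fin; apply: mulr_ge0.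
  by rewrite indicE; case: (_ \in _).
apply: prodr_ge0 => j _; apply: mulr_ge0 => //; exact: powR_ge0.
Qed.

Lemma Gamma_ge0 (s : R) : 0 <= Gamma s.
Proof.
rewrite /Gamma; apply: fine_ge0; apply: integral_ge0 => t _.
by rewrite lee_fin mulr_ge0 ?powR_ge0 ?expR_ge0.
Qed.

Lemma gc_ge0 (p theta : R) : 0 < p -> 0 <= gencauchy_c p theta.
Proof.
move=> p0; rewrite /gencauchy_c; apply: divr_ge0.
  by apply: mulr_ge0; [exact: ltW | exact: Gamma_ge0].
by rewrite !mulr_ge0 ?Gamma_ge0.
Qed.

Lemma pdf_ratio (p th r a z K : R) : 1 < p -> 1 <= th -> 0 < r -> ln r <= K ->
  (p * th - 1) * (- ln r) <= K ->
  r * gencauchy_pdf p th (a + r * z) <=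
  expR (K + th * Lc p * `|a / r|) * gencauchy_pdf p th z.
Proof.
move=> p1 th1 r0 h1 h2.
have p0 : 0 < p by apply: lt_trans p1.
have th0 : 0 <= th by apply: le_trans th1.
have c0 := gc_ge0 th p0.
rewrite /gencauchy_pdf !hhE.
have -> : a + r * z = r * (z + a / r) by field; rewrite gt_eqF.
rewrite mulrCA (mulrCA (expR _)).
rewrite -subr_ge0 -mulrBr; apply: mulr_ge0 => //; rewrite subr_ge0.
apply: (le_trans (hh_dil _ p1 th1 r0 h1 h2)).
rewrite expRD -(mulrA (expR K)); apply: ler_wpM2l; first exact: expR_ge0.
exact: hh_shift.
Qed.

Lemma prod_ratio (m : nat) (p th r K : R) (a z : m.-tuple R) : 1 < p -> 1 <= th -> 0 < r ->
  ln r <= K -> (p * th - 1) * (- ln r) <= K ->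
  r ^+ m * \prod_(j < m) gencauchy_pdf p th (tnth (taff a r z) j) <=
  expR (m%:R * K + th * Lc p * \sum_(j < m) `|tnth a j / r|) *
    \prod_(j < m) gencauchy_pdf p th (tnth z j).
Proof.
move=> p1 th1 r0 h1 h2.
have p0 : 0 < p by apply: lt_trans p1.
have c0 := gc_ge0 th p0.
have -> : m%:R * K + th * Lc p * \sum_(j < m) `|tnth a j / r| =
  \sum_(j < m) (K + th * Lc p * `|tnth a j / r|).
  by rewrite big_split /= sumr_const card_ord mulr_sumr mulr_natl.
rewrite expR_sum -big_split /=.
have -> : r ^+ m = \prod_(j < m) r by rewrite prodr_const card_ord.
rewrite -big_split /=; apply: ler_prod => j _; apply/andP; split.
  apply: mulr_ge0; first exact: ltW.
  by apply: mulr_ge0 => //; exact: powR_ge0.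
rewrite /taff tnth_mktuple.
exact: pdf_ratio.
Qed.

End S5.

End H5.

Module H6.
Import measurable_realfun lra ring.
Import Order.TTheory GRing.Theory Num.Theory.
Local Open Scope classical_set_scope.
Local Open Scope ring_scope.
Import H1 H2 H3 H4 H5.
Lemma main_aux (R : realType) (U : Type) (dist : U -> U -> R)
  (gamma eta p theta : R) (Lambda : \bar R) (m : nat)
  (f : U -> m.-tuple R) (B : U -> R) :
  is_metric dist ->
  0 < gamma -> 0 < eta -> (0%E < Lambda)%E -> 1 < p -> 1 <= theta -> (1 <= m)%N ->
  smooth_upper_bound dist f Lambda (fun x x' => expR (gamma * dist x x')) B ->
  GP dist (gencauchy_mech_prob f B eta p theta)
    (Num.max (m%:R * gamma) (m%:R * (p * theta - 1) * gamma)
       + (p - 1) `^ ((p - 1) / p) * theta * eta)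
    0 Lambda.
Proof.
move=> [d0 deq dsym dtri] g0 eta0 L0 p1 th1 m1 [B0 BL Bg].
move=> S mS x x' hd; rewrite adde0.
have p0 : 0 < p by apply: lt_trans p1.
have th0 : 0 <= theta by apply: le_trans th1.
have c0 := gc_ge0 theta p0.
have hd' : ((dist x' x)%:E <= Lambda)%E by rewrite dsym.
have lip := lip_bound (BL x') hd' (d0 x' x).
rewrite dsym in lip.
set M := Num.max (m%:R * gamma) (m%:R * (p * theta - 1) * gamma).
have M0 : 0 <= M by rewrite le_max mulr_ge0 ?ler0n // ltW.
have Lp0 : 0 <= (p - 1) `^ ((p - 1) / p) by apply: powR_ge0.
have eps0 : 0 <= M + (p - 1) `^ ((p - 1) / p) * theta * eta.
  by rewrite addr_ge0 // !mulr_ge0 // ltW.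
have dxx := d0 x x'.
have [Bx'0|Bx'n0] := eqVneq (B x') 0.
  have Bx0 : B x = 0.
    by apply/eqP; rewrite eq_le B0 andbT; have := Bg x x'; rewrite Bx'0 mulr0.
  have fxx : f x' = f x.
    by apply: l1dist0; move: lip; rewrite Bx'0 mul0r.
  have -> : gencauchy_mech_prob f B eta p theta x S = gencauchy_mech_prob f B eta p theta x' S.
    by rewrite /gencauchy_mech_prob Bx0 Bx'0 fxx.
  apply: lee_pemull; first exact: iprob_ge0.
  by rewrite lee_fin; apply: (le_trans _ (expR_ge1Dx _)); rewrite lerDl mulr_ge0.
have Bx'p : 0 < B x' by rewrite lt_def Bx'n0 B0.
have Bxp : 0 < B x.
  rewrite lt_def B0 andbT; apply/eqP => Bx0.
  by move: (Bg x' x); rewrite Bx0 mulr0 => H; move: Bx'p; rewrite ltNge H.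
set d := dist x x' in lip dxx hd *.
set r := B x' / B x.
have r0 : 0 < r by rewrite divr_gt0.
have rle : r <= expR (gamma * d).
  by rewrite /r ler_pdivrMr //; have := Bg x' x; rewrite dsym.
have rile : r^-1 <= expR (gamma * d).
  by rewrite /r invf_div ler_pdivrMr //; have := Bg x x'.
have lnr1 : ln r <= gamma * d.
  by rewrite -(expRK (gamma * d)) ler_ln ?posrE ?expR_gt0.
have lnr2 : - ln r <= gamma * d.
  by rewrite -lnV ?posrE // -(expRK (gamma * d)) ler_ln ?posrE ?expR_gt0 ?invr_gt0.
have mpos : 0 < m%:R :> R by rewrite ltr0n.
pose K := M * d / m%:R.
have hK1 : ln r <= K.
  rewrite /K ler_pdivlMr // (le_trans _ (ler_wpM2r dxx (ltac:(by rewrite le_max lexx) : m%:R * gamma <= M))) //.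
  by rewrite mulrC -mulrA ler_wpM2l // ltW.
have pth : 0 <= p * theta - 1.
  by rewrite subr_ge0 -[1]mulr1 ler_pM // ltW.
have hK2 : (p * theta - 1) * (- ln r) <= K.
  rewrite /K ler_pdivlMr // (le_trans _ (ler_wpM2r dxx (ltac:(by rewrite le_max lexx orbT) : m%:R * (p * theta - 1) * gamma <= M))) //.
  have h3 : (p * theta - 1) * (- ln r) <= (p * theta - 1) * (gamma * d) by rewrite ler_wpM2l.
  have h4 : (p * theta - 1) * (- ln r) * m%:R <= (p * theta - 1) * (gamma * d) * m%:R.
    by rewrite ler_wpM2r // ltW.
  apply: (le_trans h4); rewrite le_eqVlt; apply/orP; left; apply/eqP; ring.
pose a : m.-tuple R := [tuple (tnth (f x') i - tnth (f x) i) / (B x / eta) | i < m].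
have Etup : forall z : m.-tuple R,
    [tuple tnth (f x) i + B x / eta * tnth (taff a r z) i | i < m] =
    [tuple tnth (f x') i + B x' / eta * tnth z i | i < m].
  move=> z; apply: eq_from_tnth => i; rewrite /taff /a !tnth_mktuple /r.
  by field; rewrite !gt_eqF.
have ind0 : forall t : m.-tuple R, 0 <= (\1_S t : R) by move=> t; rewrite indicE; case: (_ \in _).
have P0 : forall z : m.-tuple R, 0 <= \prod_(j < m) gencauchy_pdf p theta (tnth z j).
  by move=> z; apply: prodr_ge0 => j _; apply: mulr_ge0 => //; exact: powR_ge0.
rewrite /gencauchy_mech_prob.
apply: (le_trans (iter_cov a r0 _)).
all: try (by move=> z; rewrite lee_fin mulr_ge0).
rewrite -iter_scale; last 2 first.
- exact: expR_ge0.
- by move=> z; rewrite lee_fin mulr_ge0.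
apply: iter_mono => z.
  rewrite -EFinM lee_fin mulr_ge0 ?mulr_ge0 //; exact: exprn_ge0 (ltW r0).
rewrite Etup -!EFinM lee_fin mulrCA (mulrCA (expR _)).
apply: ler_wpM2l; first exact: ind0.
apply: (le_trans (prod_ratio a z p1 th1 r0 hK1 hK2)).
apply: ler_wpM2r; first exact: P0.
rewrite ler_expR.
have mK : m%:R * K = M * d by rewrite /K; field; rewrite gt_eqF.
have sumE : \sum_(j < m) `|tnth a j / r| = eta / B x' * l1dist (f x') (f x).
  rewrite /l1dist mulr_sumr; apply: eq_bigr => j _.
  rewrite /a tnth_mktuple /r.
  have -> : (tnth (f x') j - tnth (f x) j) / (B x / eta) / (B x' / B x) =
     (eta / B x') * (tnth (f x') j - tnth (f x) j) by field; rewrite !gt_eqF.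
  by rewrite normrM ger0_norm // divr_ge0 // ltW.
rewrite mK sumE.
have hl : eta / B x' * l1dist (f x') (f x) <= eta * d.
  rewrite -mulrA; apply: ler_wpM2l; first exact: ltW.
  by rewrite mulrC ler_pdivrMr // mulrC.
have : Lc p * theta * (eta / B x' * l1dist (f x') (f x)) <= Lc p * theta * (eta * d).
  by apply: ler_wpM2l => //; apply: mulr_ge0.
rewrite /Lc; nra.
Qed.

End H6.

Unset Implicit Arguments.

Theorem mainTheorem4 (R : realType) (U : Type) (dist : U -> U -> R)
  (gamma eta p theta : R) (Lambda : \bar R) (m : nat)
  (f : U -> m.-tuple R) (B : U -> R) :
  is_metric dist ->
  0 < gamma -> 0 < eta -> (0%E < Lambda)%E -> 1 < p -> 1 <= theta -> (1 <= m)%N ->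
  smooth_upper_bound dist f Lambda (fun x x' => expR (gamma * dist x x')) B ->
  GP dist (gencauchy_mech_prob f B eta p theta)
    (Num.max (m%:R * gamma) (m%:R * (p * theta - 1) * gamma)
       + (p - 1) `^ ((p - 1) / p) * theta * eta)
    0 Lambda.
Proof. exact: H6.main_aux. Qed.
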